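(* Let $\Gamma$ be a positive recursive absorbing game with payoffs in $(0,1]$, let $x\in X$ be a nonabsorbing mixed action profile and $i\in I$. Then $v_i\le\max\{0,\rho_i(x)\}$. In particular, if $\rho_i(x)=-\infty$ then $v_i=0$, and if $\rho_i(x)>-\infty$ then $\rho_i(x)\ge v_i$.
   Context: A positive recursive absorbing game is $\Gamma=(I,(A_i)_{i\in I},(r_i)_{i\in I},p)$ with $I$ finite, $A_i$ finite nonempty, $A=\prod_iA_i$, $r_i:A\to(0,1]$, $p:A\to[0,1]$; at each stage, if not yet absorbed, players choose $a^n\in A$, the game absorbs with probability $p(a^n)$ with terminal payoff $r(a^n)$, and otherwise continues with payoff $0$. Undiscounted payoff: $\gamma(\sigma)=\mathbf E_\sigma[r(a^\theta)\mathbf 1_{\theta<\infty}]$ for behavior strategy profiles $\sigma$, with $\theta$ the absorption stage. Minmax value: $v_i:=\inf_{\sigma_{-i}}\sup_{\sigma_i}\gamma_i(\sigma)$. Let $\Xi_i=\Delta(A_i)$, $\Xi=\prod_i\Xi_i$; for $x\in\Xi$, ${\rm supp}(x)=\prod_i{\rm supp}(x_i)$, $p(x)=\sum_{a\in A}p(a)\prod_jx_j(a_j)$, and when $p(x)>0$, $r_i(x)=\sum_a r_i(a)p(a)\prod_jx_j(a_j)/p(x)$. Let $B=\{a\in A:p(a)=0\}$, and let $X$ be the set of $x\in\Xi$ whose support is contained in a single connected component of the graph on $B$ where two profiles are adjacent iff they differ in exactly one player's action (equivalently, $X=\{x\in\Xi:p(x)=0\}$). Define $\rho_i(x):=\max\{r_i(a_i,x_{-i}):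 a_i\in A_i,\ p(a_i,x_{-i})>0\}$, with the convention $\max\emptyset=-\infty$. *)

(* Defs.v *)
From HB Require Import structures.
From mathcomp Require Import all_boot all_order all_algebra.
From mathcomp Require Import all_classical all_reals all_analysis.
Unset Printing Implicit Defensive.
Import Order.TTheory GRing.Theory Num.Theory.
Import numFieldTopology.Exports numFieldNormedType.Exports.
Local Open Scope ring_scope.

Section AbsorbingGame.
Variables (R : realType) (I : finType) (A : I -> finType).

Definition prof := {dffun forall i : I, A i}.

Definition is_mixed (i : I) (y : {ffun A i -> R}) : Prop :=
  (forall ai, 0 <= y ai) /\ \sum_(ai : A i) y ai = 1.

Definition mprof := forall i : I, {ffun A i -> R}.
Definition is_mprof (x : mprof) : Prop := forall i, is_mixed i (x i).

Definition mprob (x : mprof) (a : prof) : R := \prod_(j : I) x j (a j).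

Definition pmix (p : prof -> R) (x : mprof) : R :=
  \sum_(a : prof) p a * mprob x a.

Definition pdev (p : prof -> R) (x : mprof) (i : I) (ai : A i) : R :=
  \sum_(a : prof | a i == ai) p a * \prod_(j : I | j != i) x j (a j).

Definition rdev (r : I -> prof -> R) (p : prof -> R) (x : mprof)
    (i : I) (ai : A i) : R :=
  (\sum_(a : prof | a i == ai) r i a * p a * \prod_(j : I | j != i) x j (a j))
  / pdev p x i ai.

Definition rho (r : I -> prof -> R) (p : prof -> R) (x : mprof) (i : I)
    : \bar R :=
  \big[Order.max/-oo%E]_(ai : A i | 0 < pdev p x i ai) (rdev r p x i ai)%:E.

(* Behavior strategy profiles: player i's mixed action at stage n depends on
   the history h of the (non-absorbing) action profiles played so far. *)
Definition strat := forall i : I, seq prof -> {ffun A i -> R}.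
Definition is_strat (s : strat) : Prop := forall i h, is_mixed i (s i h).

Definition sprob (s : strat) (h : seq prof) (a : prof) : R :=
  \prod_(j : I) s j h (a j).

(* probability that the play starts with past ++ fut without absorption,
   given that past has already occurred *)
Fixpoint hw_aux (p : prof -> R) (s : strat) (past fut : seq prof) : R :=
  match fut with
  | [::] => 1
  | a :: f => sprob s past a * (1 - p a) * hw_aux p s (rcons past a) f
  end.

Definition hweight (p : prof -> R) (s : strat) (h : seq prof) : R :=
  hw_aux p s [::] h.

(* expected absorbing payoff of player i received at stage n+1
   (i.e. E[r_i(a^theta) 1_{theta = n+1}]) *)
Definition stage_payoff (r : I -> prof -> R) (p : prof -> R) (s : strat)
    (i : I) (n : nat) : R :=
  \sum_(h : n.-tuple prof)
     hweight p s h * \sum_(a : prof) sprob s h a * p a * r i a.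

(* undiscounted payoff gamma_i(s) = E_s[ r_i(a^theta) 1_{theta < oo} ]
   = sum over n of the stage payoffs (a series of nonnegative terms) *)
Definition gamma (r : I -> prof -> R) (p : prof -> R) (s : strat) (i : I) : R :=
  limn ((series (stage_payoff r p s i)) : nat -> R).

Definition minmax (r : I -> prof -> R) (p : prof -> R) (i : I) : R :=
  inf [set inf_val | exists s : strat, is_strat s /\
    inf_val = sup [set gamma r p t i | t in
      [set t : strat | is_strat t /\ forall j, j != i -> t j = s j]]].

End AbsorbingGame.

Arguments prof {I} A.
Arguments is_mixed {R I A i} y.
Arguments mprof R {I} A.
Arguments is_mprof {R I A} x.
Arguments mprob {R I A} x a.
Arguments pmix {R I A} p x.
Arguments pdev {R I A} p x i ai.
Arguments rdev {R I A} r p x i ai.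
Arguments rho {R I A} r p x i.
Arguments strat R {I} A.
Arguments is_strat {R I A} s.
Arguments sprob {R I A} s h a.
Arguments hw_aux {R I A} p s past fut.
Arguments hweight {R I A} p s h.
Arguments stage_payoff {R I A} r p s i n.
Arguments gamma {R I A} r p s i.
Arguments minmax {R I A} r p i.

(* Main.v *)
Require Import Defs.
From HB Require Import structures.
From mathcomp Require Import all_boot all_order all_algebra.
From mathcomp Require Import all_classical all_reals all_analysis.
From mathcomp Require Import ring lra.
Import Order.TTheory GRing.Theory Num.Theory.
Local Open Scope ring_scope.
Set Warnings "-all".

Lemma sum_prod_dep (R : realType) (I : finType) (A : I -> finType)
  (f : forall i, {ffun A i -> R}) :
  \sum_(a : prof A) \prod_(j : I) f j (a j) = \prod_(j : I) \sum_(b : A j) f j b.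
Proof.
rewrite (reindex (@dffun_of_fprod I A)); last first.
  by apply: onW_bij; exact: dffun_of_fprod_bij.
under eq_bigr => t _ do under eq_bigr => j _ do rewrite ffunE.
rewrite (eq_bigl (fun t => predT (fprod_fun t))) //.
rewrite (big_fprod_dep 1 _ (fun j => f j)).
rewrite big_mkcondr /=. rewrite -(bigA_distr_big_dep (fun j => tagged_with A j) (fun j u => untag 0 (f j) u)).

apply: eq_bigr => j _.
by rewrite (big_tag (fun j => f j)) big_mkcond.
Qed.

Definition shift (R : realType) (I : finType) (A : I -> finType)
  (s : strat R A) (a : prof A) : strat R A := fun j h => s j (a :: h).
Arguments shift {R I A} s a.

Lemma hw_shift (R : realType) (I : finType) (A : I -> finType)
  (p : prof A -> R) (s : strat R A) a past f :
  hw_aux p s (a :: past) f = hw_aux p (shift s a) past f.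
Proof. by elim: f past => [//|b f IH] past /=; rewrite IH. Qed.

Lemma stage_succ (R : realType) (I : finType) (A : I -> finType)
  (r : I -> prof A -> R) (p : prof A -> R) (s : strat R A) i n :
  stage_payoff r p s i n.+1 =
  \sum_(a : prof A) sprob s [::] a * (1 - p a) * stage_payoff r p (shift s a) i n.
Proof.
rewrite /stage_payoff.
rewrite (reindex (fun u : prof A * n.-tuple (prof A) => [tuple of u.1 :: u.2])); last first.
  exists (fun t => (thead t, [tuple of behead t])).
    by move=> [a t] _ /=; congr pair; apply: val_inj.
  by move=> t _; rewrite [in RHS](tuple_eta t).
rewrite -(pair_bigA _ (fun (a : prof A) (t : n.-tuple (prof A)) => hweight p s [tuple of a :: t] * \sum_(b : prof A) sprob s [tuple of a :: t] b * p b * r i b)) /=.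
apply: eq_bigr => a _; rewrite big_distrr /=.
apply: eq_bigr => t _.
by rewrite /hweight /= hw_shift !mulrA.
Qed.

Lemma sprob_ge0 (R : realType) (I : finType) (A : I -> finType)
  (s : strat R A) h a : is_strat s -> 0 <= sprob s h a.
Proof. by move=> hs; apply: prodr_ge0 => j _; case: (hs j h). Qed.

Lemma sum_sprob (R : realType) (I : finType) (A : I -> finType)
  (s : strat R A) h : is_strat s -> \sum_a sprob s h a = 1.
Proof.
move=> hs; rewrite /sprob (sum_prod_dep _ _ _ (fun j => s j h)).
by apply: big1 => j _; case: (hs j h).
Qed.

Lemma shift_strat (R : realType) (I : finType) (A : I -> finType)
  (s : strat R A) a : is_strat s -> is_strat (shift s a).
Proof. by move=> hs j h; exact: hs. Qed.

Lemma hw_ge0 (R : realType) (I : finType) (A : I -> finType)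
  (p : prof A -> R) (s : strat R A) past f :
  (forall a, 0 <= p a /\ p a <= 1) -> is_strat s -> 0 <= hw_aux p s past f.
Proof.
move=> hp hs; elim: f past => [|b f IH] past /=; first exact: ler01.
apply: mulr_ge0; last exact: IH.
apply: mulr_ge0; first exact: sprob_ge0.
by rewrite subr_ge0; case: (hp b).
Qed.

Lemma stage_ge0 (R : realType) (I : finType) (A : I -> finType)
  (r : I -> prof A -> R) (p : prof A -> R) (s : strat R A) i n :
  (forall a, 0 <= p a /\ p a <= 1) -> (forall a, 0 <= r i a) -> is_strat s ->
  0 <= stage_payoff r p s i n.
Proof.
move=> hp hr hs; apply: sumr_ge0 => h _; apply: mulr_ge0; first exact: hw_ge0.
apply: sumr_ge0 => a _; apply: mulr_ge0 => //; apply: mulr_ge0; first exact: sprob_ge0.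
by case: (hp a).
Qed.

Lemma stage0E (R : realType) (I : finType) (A : I -> finType)
  (r : I -> prof A -> R) (p : prof A -> R) (s : strat R A) i :
  stage_payoff r p s i 0 = \sum_a sprob s [::] a * p a * r i a.
Proof.
rewrite /stage_payoff (big_pred1 [tuple]); last by move=> t; rewrite /= [t]tuple0; apply/esym/eqP.
by rewrite /hweight /= mul1r.
Qed.

Lemma partial_bound (R : realType) (I : finType) (A : I -> finType)
  (r : I -> prof A -> R) (p : prof A -> R) i (C : strat R A -> Prop) M :
  0 <= M -> (forall a, 0 <= p a /\ p a <= 1) -> (forall a, 0 <= r i a) ->
  (forall s, C s -> is_strat s) -> (forall s a, C s -> C (shift s a)) ->
  (forall s, C s -> \sum_a sprob s [::] a * p a * r i a <=
                    M * \sum_a sprob s [::] a * p a) ->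
  forall N s, C s -> \sum_(n < N) stage_payoff r p s i n <= M.
Proof.
move=> M0 hp hr Cs Csh H0; elim=> [|N IH] s hs; first by rewrite big_ord0.
rewrite big_ord_recl /= stage0E.
under eq_bigr => n _ do rewrite stage_succ.
rewrite exchange_big /=.
have hss := Cs _ hs.
have -> : M = M * \sum_a sprob s [::] a * p a + \sum_a sprob s [::] a * (1 - p a) * M.
  rewrite -mulr_suml [X in _ + X]mulrC -mulrDr -big_split /=.
  under eq_bigr => a _ do rewrite -mulrDr addrC subrK mulr1.
  by rewrite sum_sprob // mulr1.
apply: lerD; first exact: H0.
apply: ler_sum => a _; rewrite -big_distrr /=.
apply: ler_wpM2l; last exact: IH (Csh _ _ hs).
apply: mulr_ge0; first exact: sprob_ge0.
by rewrite subr_ge0; case: (hp a).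
Qed.

Lemma gamma_bound (R : realType) (I : finType) (A : I -> finType)
  (r : I -> prof A -> R) (p : prof A -> R) (s : strat R A) i M :
  (forall n, 0 <= stage_payoff r p s i n) ->
  (forall N, \sum_(n < N) stage_payoff r p s i n <= M) ->
  0 <= gamma r p s i /\ gamma r p s i <= M.
Proof.
move=> u0 uM; rewrite /gamma.
set u := stage_payoff r p s i in u0 uM *.
have nd : nondecreasing_seq (series u).
  exact: (@nondecreasing_series _ u predT 0).
have hub : has_ubound (range (series u)).
  by exists M => _ [n _ <-]; rewrite /series /= big_mkord.
have cv := nondecreasing_is_cvgn nd hub.
split.
  apply: limr_ge => //; apply: nearW => n.
  by rewrite /series /=; apply: sumr_ge0 => k _.
apply: limr_le => //; apply: nearW => n.
by rewrite /series /= big_mkord.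
Qed.

Definition num (R : realType) (I : finType) (A : I -> finType)
  (r : I -> prof A -> R) (p : prof A -> R) (x : mprof R A) (i : I) (ai : A i) : R :=
  \sum_(a : prof A | a i == ai) r i a * p a * \prod_(j : I | j != i) x j (a j).
Arguments num {R I A} r p x i ai.

Lemma stage0_key (R : realType) (I : finType) (A : I -> finType)
  (r : I -> prof A -> R) (p : prof A -> R) (x : mprof R A) (i : I) (t : strat R A) M :
  is_strat t -> (forall j, j != i -> forall h, t j h = x j) ->
  (forall ai, num r p x i ai <= M * pdev p x i ai) ->
  \sum_a sprob t [::] a * p a * r i a <= M * \sum_a sprob t [::] a * p a.
Proof.
move=> ht Ct hnum.
have sE : forall a, sprob t [::] a = t i [::] (a i) * \prod_(j | j != i) x j (a j).
  move=> a; rewrite /sprob (bigD1 i) //=; congr (_ * _).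
  by apply: eq_bigr => j hj; rewrite Ct.
rewrite (partition_big (I:=prof A) (J:=A i) (fun a : prof A => a i) predT) //=.
rewrite [X in _ <= _ * X](partition_big (I:=prof A) (J:=A i) (fun a : prof A => a i) predT) //=.
rewrite big_distrr /=; apply: ler_sum => ai _.
have -> : \sum_(a : prof A | true && (a i == ai)) sprob t [::] a * p a * r i a
    = t i [::] ai * num r p x i ai.
  rewrite /num big_distrr /=; apply: eq_bigr => a /eqP <-.
  by rewrite sE; ring.
have -> : \sum_(a : prof A | true && (a i == ai)) sprob t [::] a * p a
    = t i [::] ai * pdev p x i ai.
  rewrite /pdev big_distrr /=; apply: eq_bigr => a /eqP <-.
  by rewrite sE; ring.
rewrite mulrCA; apply: ler_wpM2l; last exact: hnum.
by case: (ht i [::]).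
Qed.

Lemma rho_bound (R : realType) (I : finType) (A : I -> finType)
  (r : I -> prof A -> R) (p : prof A -> R) (x : mprof R A) (i : I) :
  (forall i a, 0 < r i a /\ r i a <= 1) -> (forall a, 0 <= p a /\ p a <= 1) ->
  is_mprof x ->
  exists M, [/\ 0 <= M, (forall ai, num r p x i ai <= M * pdev p x i ai),
    (rho r p x i = -oo%E -> M = 0) & (rho r p x i != -oo%E -> rho r p x i = M%:E)].
Proof.
move=> hr hp hx.
have Pi0 : forall a : prof A, 0 <= \prod_(j : I | j != i) x j (a j).
  by move=> a; apply: prodr_ge0 => j _; case: (hx j).
have pdev0 : forall ai, 0 <= pdev p x i ai.
  move=> ai; apply: sumr_ge0 => a _; apply: mulr_ge0 => //; by case: (hp a).
have num0 : forall ai, 0 <= num r p x i ai.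
  move=> ai; apply: sumr_ge0 => a _; apply: mulr_ge0 => //.
  by apply: mulr_ge0; [exact: ltW (proj1 (hr i a)) | case: (hp a)].
have numle : forall ai, num r p x i ai <= pdev p x i ai.
  move=> ai; apply: ler_sum => a _; rewrite -mulrA ler_piMl //.
    by apply: mulr_ge0 => //; case: (hp a).
  by case: (hr i a).
have ub : forall ai, 0 < pdev p x i ai -> ((rdev r p x i ai)%:E <= rho r p x i)%E.
  by move=> ai hai; rewrite /rho; apply: le_bigmax_cond.
have numE : forall ai, 0 < pdev p x i ai ->
    num r p x i ai = rdev r p x i ai * pdev p x i ai.
  move=> ai hai; rewrite /rdev divfK; first by [].
  by rewrite gt_eqF.
have att : rho r p x i = -oo%E \/
    exists ai, 0 < pdev p x i ai /\ rho r p x i = (rdev r p x i ai)%:E.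
  rewrite /rho; apply: (big_ind (fun e : \bar R => e = -oo%E \/ exists ai, 0 < pdev p x i ai /\ e = (rdev r p x i ai)%:E)); first by left.
    move=> e1 e2 h1 h2; rewrite maxEle; by case: ifP.
  by move=> ai hai; right; exists ai.
case: att => [hinf | [a0 [ha0 hE]]].
  exists 0; split => //; last by rewrite hinf.
  move=> ai; rewrite mul0r.
  have [hpos|hnp] := ltP 0 (pdev p x i ai).
    by have := ub _ hpos; rewrite hinf leeNy_eq.
  by apply: (le_trans (numle ai)).
exists (rdev r p x i a0); split.
- by rewrite /rdev; apply: divr_ge0; [rewrite -/(num r p x i a0); exact: num0 | exact: pdev0].
- move=> ai; have [hpos|hnp] := ltP 0 (pdev p x i ai).
    rewrite numE //; apply: ler_wpM2r; first exact: pdev0.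
    by have := ub _ hpos; rewrite hE lee_fin.
  have -> : pdev p x i ai = 0 by apply/le_anti; rewrite hnp pdev0.
  by rewrite mulr0; have := numle ai; rewrite (_ : pdev p x i ai = 0) //; apply/le_anti; rewrite hnp pdev0.
- by rewrite hE.
- by rewrite hE.
Qed.

Theorem mainTheorem4 (R : realType) (I : finType) (A : I -> finType)
    (r : I -> prof A -> R) (p : prof A -> R)
    (hA : forall i, (0 < #|A i|)%N)
    (hr : forall i a, 0 < r i a /\ r i a <= 1)
    (hp : forall a, 0 <= p a /\ p a <= 1)
    (x : mprof R A) (hx : is_mprof x) (hX : pmix p x = 0) (i : I) :
  [/\ ((minmax r p i)%:E <= Order.max 0%E (rho r p x i))%E,
      rho r p x i = (-oo)%E -> minmax r p i = 0
    & rho r p x i != (-oo)%E -> ((minmax r p i)%:E <= rho r p x i)%E].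
Proof.
have hr0 : forall a, 0 <= r i a by move=> a; exact: ltW (proj1 (hr i a)).
have g01 : forall t : strat R A, is_strat t -> 0 <= gamma r p t i /\ gamma r p t i <= 1.
  move=> t ht; apply: gamma_bound.
    by move=> n; apply: stage_ge0.
  move=> N; apply: (@partial_bound R I A r p i (@is_strat R I A) 1) => //.
  - by move=> s a hs; exact: shift_strat.
  - move=> s hs; rewrite mul1r; apply: ler_sum => a _.
    rewrite ler_piMr //; first by apply: mulr_ge0; [exact: sprob_ge0 | case: (hp a)].
    by case: (hr i a).
set T := fun s : strat R A => [set gamma r p t i | t in
      [set t : strat R A | is_strat t /\ forall j, j != i -> t j = s j]]%classic.
have supge0 : forall s, is_strat s -> 0 <= sup (T s).
  move=> s hs; have [g0 _] := g01 s hs.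
  apply: (le_trans g0); apply: sup_upper_bound; last by exists s.
  split; first by exists (gamma r p s i); exists s.
  by exists 1 => _ [t [ht _] <-]; case: (g01 t ht).
pose s0 : strat R A := fun j _ => x j.
have hs0 : is_strat s0 by move=> j h; exact: hx.
set SS := [set v | exists s : strat R A, is_strat s /\ v = sup (T s)]%classic.
have SSE : minmax r p i = inf SS by [].
have hlb : has_lbound SS by exists 0 => _ [s [hs ->]]; exact: supge0.
have mm0 : 0 <= minmax r p i.
  rewrite SSE; apply: lb_le_inf; first by exists (sup (T s0)), s0.
  by move=> _ [s [hs ->]]; exact: supge0.
have mmM : forall M, 0 <= M -> (forall ai, num r p x i ai <= M * pdev p x i ai) ->
    minmax r p i <= M.
  move=> M M0 hM; rewrite SSE.
  apply: (@le_trans _ _ (sup (T s0))).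
    by apply: ge_inf => //; exists s0.
  apply: ge_sup; first by exists (gamma r p s0 i), s0.
  move=> _ [t [ht hts] <-].
  suff : 0 <= gamma r p t i /\ gamma r p t i <= M by case.
  apply: gamma_bound; first by move=> n; apply: stage_ge0.
  move=> N.
  apply: (@partial_bound R I A r p i (fun t : strat R A => is_strat t /\
       forall j, j != i -> forall h, t j h = x j) M) => //.
  - by move=> s [].
  - by move=> s a [hs hC]; split; [exact: shift_strat | move=> j hj h; exact: hC].
  - by move=> s [hs hC]; exact: (@stage0_key R I A r p x i s M).
  - by split => // j hj h; rewrite hts.
have [M [M0 hM hinf hfin]] := @rho_bound R I A r p x i hr hp hx.
have hmm := mmM M M0 hM.
have [hrho|hrho] := eqVneq (rho r p x i) (-oo%E).
  have M00 := hinf hrho; subst M.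
  split => //.
  - by rewrite hrho /= lee_fin.
  - by move=> _; apply/le_anti; rewrite hmm mm0.
have hE := hfin hrho.
split.
- rewrite hE; have -> : Order.max 0%E M%:E = M%:E.
    by apply/max_idPr; rewrite lee_fin.
  by rewrite lee_fin.
- by move=> h; move: hrho; rewrite h eqxx.
- by move=> _; rewrite hE lee_fin.
Qed.
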